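(* Let $\mathcal{M}$ be the association scheme generated by the Möbius–Kantor graph $GP(8,3)$ (a rank-$6$ scheme), with distinguished relation $R_1$ the edge relation of $GP(8,3)$. Then every association scheme with a distinguished relation having the same relation-distribution diagram as $(\mathcal{M},R_1)$ is isomorphic to $\mathcal{M}$ (with the distinguished relation corresponding to $R_1$).
   Context: A (symmetric) association scheme with rank $d+1$ on a finite set $X$ is a partition $\mathcal{R}=\{R_0,\dots,R_d\}$ of $X\times X$ with $R_0$ the diagonal, each $R_i$ symmetric, and numbers $p^h_{ij}$ such that for every $(x,y)\in R_h$ the number of $z$ with $(x,z)\in R_i$, $(z,y)\in R_j$ equals $p^h_{ij}$; $k_i=p^0_{ii}$. The association scheme generated by a graph is the association scheme of minimal rank having the graph's edge relation as a relation. Two schemes with distinguished relations $R_1$, $R'_1$ have the same relation-distribution diagram if they have the same rank and there is a bijection $\sigma$ of the index set with $\sigma(0)=0$, $\sigma(1)=1$, $k_i=k'_{\sigma(i)}$ and $p^i_{1j}=p'^{\sigma(i)}_{1\sigma(j)}$ for all $i,j$. The generalized Petersen graph $GP(n,s)$ has vertices $i$ and $i^*$ for $i\in\mathbb{Z}_n$, with $i$ adjacent to $i\pm1$ and $i^*$, and $i^*$ adjacent to $(i\pm s)^*$. *)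

(* Defs.v *)
From mathcomp Require Import all_boot.
Set Implicit Arguments. Unset Strict Implicit. Unset Printing Implicit Defensive.

(* A symmetric association scheme of rank n on a finite type T is given by
   its class function c : T -> T -> 'I_n ; (x,y) \in R_i  <->  c x y = i. *)
Definition is_scheme (T : finType) (n : nat) (c : T -> T -> 'I_n) : Prop :=
  [/\ (forall x y, (val (c x y) == 0) = (x == y)),
      (forall x y, c x y = c y x),
      (forall i : 'I_n, exists x y, c x y = i)
    & (forall h i j : 'I_n, exists p : nat, forall x y, c x y = h ->
         #|[set z | (c x z == i) && (c z y == j)]| = p)].

Definition pnum (T : finType) (n : nat) (c : T -> T -> 'I_n) (h i j : nat) : nat :=
  if [pick xy : T * T | val (c xy.1 xy.2) == h] is Some xy then
    #|[set z | (val (c xy.1 z) == i) && (val (c z xy.2) == j)]|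
  else 0.

Definition valency (T : finType) (n : nat) (c : T -> T -> 'I_n) (i : nat) : nat :=
  pnum c 0 i i.

Definition same_diagram (T T' : finType) (n n' : nat)
    (c : T -> T -> 'I_n) (c' : T' -> T' -> 'I_n') : Prop :=
  n = n' /\
  exists sigma : 'I_n -> 'I_n', [/\ bijective sigma,
    (forall i, val i = 0 -> val (sigma i) = 0),
    (forall i, val i = 1 -> val (sigma i) = 1),
    (forall i, valency c (val i) = valency c' (val (sigma i)))
  & (forall i j, pnum c (val i) 1 (val j) = pnum c' (val (sigma i)) 1 (val (sigma j)))].

Definition scheme_iso_dist (T T' : finType) (n n' : nat)
    (c : T -> T -> 'I_n) (c' : T' -> T' -> 'I_n') : Prop :=
  exists (f : T' -> T) (tau : 'I_n' -> 'I_n),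
    [/\ bijective f, bijective tau,
        (forall x y, c (f x) (f y) = tau (c' x y))
      & (forall i, (val (tau i) == 1) = (val i == 1))].

(* The scheme generated by a graph E: a scheme of minimal rank having E as a
   relation; here E is placed as the distinguished relation R_1. *)
Definition generated_by (T : finType) (E : rel T) (n : nat) (c : T -> T -> 'I_n) : Prop :=
  [/\ is_scheme c,
      (forall x y, (val (c x y) == 1) = E x y)
    & (forall n' (c' : T -> T -> 'I_n'), is_scheme c' ->
         (exists i : 'I_n', forall x y, (c' x y == i) = E x y) -> n <= n')].

(* Generalized Petersen graph GP(m,s): vertex (false,i) = i, (true,i) = i^*. *)
Definition gp_adj (m s : nat) : rel (bool * 'I_m) :=
  fun u v =>
    match u, v with
    | (false, i), (false, j) => (val j == (val i + 1) %% m) || (val i == (val j + 1) %% m)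
    | (false, i), (true, j) => i == j
    | (true, i), (false, j) => i == j
    | (true, i), (true, j) => (val j == (val i + s) %% m) || (val i == (val j + s) %% m)
    end.
Arguments gp_adj m s : clear implicits.

(* Main.v *)
Require Import Defs.
From mathcomp Require Import all_boot zify.
Set Implicit Arguments. Unset Strict Implicit. Unset Printing Implicit Defensive.

Definition V := (bool * 'I_8)%type.
Definition E0 : rel V := gp_adj 8 3.
Definition tabl (b b' : bool) (k : nat) : nat :=
  nth 0 (match b, b' with
   | false, false => [:: 0;1;2;4;5;4;2;1]
   | true, true => [:: 0;4;2;1;5;1;2;4]
   | _, _ => [:: 1;2;3;2;4;2;3;2] end) k.
Definition I6 : seq 'I_6 := [:: @Ordinal 6 0 isT; @Ordinal 6 1 isT; @Ordinal 6 2 isT;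
  @Ordinal 6 3 isT; @Ordinal 6 4 isT; @Ordinal 6 5 isT].
Definition I8 : seq 'I_8 := [:: @Ordinal 8 0 isT; @Ordinal 8 1 isT; @Ordinal 8 2 isT;
  @Ordinal 8 3 isT; @Ordinal 8 4 isT; @Ordinal 8 5 isT; @Ordinal 8 6 isT; @Ordinal 8 7 isT].
Definition c0 (u v : V) : 'I_6 := nth ord0 I6 (tabl u.1 v.1 ((8 + v.2 - u.2) %% 8)).
Definition Vs : seq V := [seq (b, i) | b <- [:: false; true], i <- I8].

Lemma memV (v : V) : v \in Vs.
Proof. case: v => b i; apply/allpairsP; exists (b, i) => /=; split; [by case: b | by case: i => [[|[|[|[|[|[|[|[|m]]]]]]]] Hi] | by []]. Qed.
Lemma memI6 (i : 'I_6) : i \in I6.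
Proof. by case: i => [[|[|[|[|[|[|m]]]]]] Hi]. Qed.
Lemma uniqVs : uniq Vs. Proof. by vm_compute. Qed.

Definition allV (P : pred V) := all P Vs.
Lemma allVP (P : pred V) : allV P -> forall v, P v.
Proof. by move=> /allP H v; apply: H; apply: memV. Qed.
Lemma allI6P (P : pred 'I_6) : all P I6 -> forall v, P v.
Proof. by move=> /allP H v; apply: H; apply: memI6. Qed.

Lemma cardV (P : pred V) : #|P| = count P Vs.
Proof.
rewrite -size_filter; have /card_uniqP <- : uniq (filter P Vs) by apply: filter_uniq; apply: uniqVs.
by apply: eq_card => v; rewrite mem_filter memV andbT.
Qed.

Section G.
Variables (T : finType) (cnt : pred T -> nat) (E : rel T).
Definition cn u v := cnt (fun w => E u w && E w v).
Definition D2 u w := (u != w) && ~~ E u w && (0 < cn u w).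
Definition n2 u v := cnt (fun w => E v w && D2 u w).
Definition Gn u v : nat := if u == v then 0 else if E u v then 1 else if 0 < cn u v then 2
  else if n2 u v == 3 then 3 else if n2 u v == 0 then 5 else 4.
End G.

Definition crd (T : finType) (P : pred T) := #|P|.

Lemma Gn_ext (T : finType) (c1 c2 : pred T -> nat) (E : rel T) :
  (forall P1 P2 : pred T, P1 =1 P2 -> c1 P1 = c2 P2) -> forall u v, Gn c1 E u v = Gn c2 E u v.
Proof.
move=> H u v.
have Hcn : forall u v, cn c1 E u v = cn c2 E u v by move=> ? ?; apply: H.
have Hn2 : n2 c1 E u v = n2 c2 E u v by apply: H => w; rewrite /D2 Hcn.
by rewrite /Gn Hcn Hn2.
Qed.

Definition cntV (P : pred V) := count P Vs.

Lemma c0Gb : allV (fun u => allV (fun v => val (c0 u v) == Gn cntV E0 u v)).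
Proof. by vm_compute. Qed.

Lemma c0G u v : val (c0 u v) = Gn (@crd V) E0 u v.
Proof.
rewrite (Gn_ext (c2 := cntV)); last by move=> P1 P2 HP; rewrite /crd cardV; apply: eq_count.
by have /allVP /(_ v) /eqP := allVP c0Gb u.
Qed.

Lemma class_count (T : finType) n (c : T -> T -> 'I_n) : is_scheme c ->
  forall u v u' v', c u v = c u' v' -> forall (Q : pred 'I_n) i,
  #|[pred w | Q (c u w) && (c w v == i)]| = #|[pred w | Q (c u' w) && (c w v' == i)]|.
Proof.
move=> [_ _ _ Hp] u v u' v' e Q i.
have key : forall x y, #|[pred w | Q (c x w) && (c w y == i)]| =
    \sum_(j | Q j) #|[set w | (c x w == j) && (c w y == i)]|.
  move=> x y; rewrite -sum1_card (partition_big (c x) Q) //=; last by move=> w /andP[].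
  apply: eq_bigr => j Qj; rewrite -sum1_card; apply: eq_bigl => w; rewrite !inE /=.
  by case: (c x w == j) /eqP => [->|]; rewrite ?Qj ?andbT ?andbF.
rewrite !key; apply: eq_bigr => j _; have [p Hpp] := Hp (c u v) j i.
by rewrite !Hpp // -e.
Qed.

Lemma Ginv (T : finType) n (c : T -> T -> 'I_n) (E : rel T) (i1 : 'I_n) :
  is_scheme c -> (forall x y, E x y = (c x y == i1)) ->
  forall u v u' v', c u v = c u' v' -> Gn (@crd T) E u v = Gn (@crd T) E u' v'.
Proof.
move=> sc HE; have [H0 Hs _ _] := sc.
have Heq : forall u v u' v', c u v = c u' v' -> (u == v) = (u' == v').
  by move=> u v u' v' e; rewrite -!H0 e.
have HE2 : forall u v u' v', c u v = c u' v' -> E u v = E u' v'.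
  by move=> u v u' v' e; rewrite !HE e.
have Hcn : forall u v u' v', c u v = c u' v' -> cn (@crd T) E u v = cn (@crd T) E u' v'.
  move=> u v u' v' e; rewrite /cn /crd.
  have Hc : forall x y, #|(fun w => E x w && E w y)| = #|[pred w | (c x w == i1) && (c w y == i1)]|.
    by move=> x y; apply: eq_card => w; rewrite unfold_in !inE /= !HE.
  by rewrite !Hc (class_count sc e (fun j => j == i1)).
have HD2 : forall u w u' w', c u w = c u' w' -> D2 (@crd T) E u w = D2 (@crd T) E u' w'.
  by move=> u w u' w' e; rewrite /D2 (Heq _ _ _ _ e) (HE2 _ _ _ _ e) (Hcn _ _ _ _ e).
pose Q2 := fun j => [exists u, exists w, (c u w == j) && D2 (@crd T) E u w].
have HQ2 : forall u w, D2 (@crd T) E u w = Q2 (c u w).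
  move=> u w; apply/idP/existsP => [H|[u' /existsP [w' /andP [/eqP e H]]]].
    by exists u; apply/existsP; exists w; rewrite eqxx H.
  by rewrite (HD2 u w u' w') // e.
move=> u v u' v' e.
have Hn2 : n2 (@crd T) E u v = n2 (@crd T) E u' v'.
  rewrite /n2 /crd.
  have Hc : forall x y, #|(fun w => E y w && D2 (@crd T) E x w)| = #|[pred w | Q2 (c x w) && (c w y == i1)]|.
    by move=> x y; apply: eq_card => w; rewrite unfold_in !inE /= HQ2 HE Hs andbC.
  by rewrite !Hc (class_count sc e Q2).
by rewrite /Gn (Heq _ _ _ _ e) (HE2 _ _ _ _ e) (Hcn _ _ _ _ e) Hn2.
Qed.

Definition x0 : V := (false, @Ordinal 8 0 isT).
Definition rep (h : 'I_6) : V := nth x0 [:: x0; (false, @Ordinal 8 1 isT); (false, @Ordinal 8 2 isT);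
   (true, @Ordinal 8 2 isT); (false, @Ordinal 8 3 isT); (false, @Ordinal 8 4 isT)] h.
Definition Pf (h i j : 'I_6) := count (fun z => (c0 x0 z == i) && (c0 z (rep h) == j)) Vs.
Definition P0n (h j : nat) : nat := nth 0 (nth [::] [:: [:: 0;3;0;0;0;0]; [:: 1;0;2;0;0;0];
   [:: 0;1;0;1;1;0]; [:: 0;0;3;0;0;0]; [:: 0;0;2;0;0;1]; [:: 0;0;0;0;3;0]] h) j.
Definition K0n (j : nat) : nat := nth 0 [:: 1;3;6;2;3;1] j.
Definition o1 : 'I_6 := @Ordinal 6 1 isT.

Lemma chk1 : allV (fun u => allV (fun v => all (fun i => all (fun j =>
   count (fun z => (c0 u z == i) && (c0 z v == j)) Vs == Pf (c0 u v) i j) I6) I6)).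
Proof. by vm_compute. Qed.
Lemma chk2 : allV (fun u => allV (fun v => [&& (val (c0 u v) == 0) == (u == v),
   c0 u v == c0 v u & (val (c0 u v) == 1) == E0 u v])).
Proof. by vm_compute. Qed.
Lemma chk3 : all (fun h => (c0 x0 (rep h) == h) && all (fun j => Pf h o1 j == P0n h j) I6) I6.
Proof. by vm_compute. Qed.
Lemma chk4 : allV (fun u => all (fun j => count (fun z => c0 u z == j) Vs == K0n j) I6).
Proof. by vm_compute. Qed.
Lemma chk5 : allV (fun u => count (fun z => E0 u z) Vs == 3).
Proof. by vm_compute. Qed.

Lemma c0_cnt u v i j : #|[set z | (c0 u z == i) && (c0 z v == j)]| = Pf (c0 u v) i j.
Proof.
rewrite cardsE cardV; apply/eqP.
by have /allVP /(_ v) /allI6P /(_ i) /allI6P /(_ j) := allVP chk1 u.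
Qed.

Lemma c0_0 u v : (val (c0 u v) == 0) = (u == v).
Proof. by have /allVP /(_ v) /and3P [/eqP -> _ _] := allVP chk2 u. Qed.
Lemma c0_sym u v : c0 u v = c0 v u.
Proof. by have /allVP /(_ v) /and3P [_ /eqP -> _] := allVP chk2 u. Qed.
Lemma c0_E u v : (val (c0 u v) == 1) = E0 u v.
Proof. by have /allVP /(_ v) /and3P [_ _ /eqP ->] := allVP chk2 u. Qed.
Lemma c0_rep h : c0 x0 (rep h) = h.
Proof. by have /allI6P /(_ h) /andP [/eqP -> _] := chk3. Qed.
Lemma c0_P u v (j : 'I_6) : #|[set z | (c0 u z == o1) && (c0 z v == j)]| = P0n (c0 u v) j.
Proof. rewrite c0_cnt. have := chk3. move/allI6P/(_ (c0 u v))/andP => [_ H]. by have /eqP := allI6P H j. Qed.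
Lemma c0_K u (j : 'I_6) : #|[set z | c0 u z == j]| = K0n j.
Proof. rewrite cardsE cardV; apply/eqP. have := allVP chk4 u. by move/allI6P/(_ j). Qed.
Lemma E0_deg u : #|[set z | E0 u z]| = 3.
Proof. by rewrite cardsE cardV; apply/eqP; have := allVP chk5 u. Qed.

Lemma c0_scheme : is_scheme c0.
Proof.
split; [exact: c0_0 | exact: c0_sym | by move=> i; exists x0, (rep i); rewrite c0_rep |].
move=> h i j; exists (Pf h i j) => x y <-; exact: c0_cnt.
Qed.

Definition a0 : V := (false, @Ordinal 8 1 isT).

Lemma Tside n (c : V -> V -> 'I_n) : generated_by (gp_adj 8 3) c ->
  exists (phi : 'I_n -> 'I_6) (phiinv : 'I_6 -> 'I_n),
    [/\ cancel phi phiinv, cancel phiinv phi & forall u v, c0 u v = phi (c u v)].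
Proof.
move=> [sc HE1' Hmin].
have HE1 : forall x y, (val (c x y) == 1) = E0 x y := HE1'.
pose i1 := c x0 a0.
have vi1 : val i1 = 1 by apply/eqP; rewrite HE1.
have HE : forall x y, E0 x y = (c x y == i1).
  by move=> x y; rewrite -HE1 -val_eqE vi1.
have phiP : forall u v u' v', c u v = c u' v' -> c0 u v = c0 u' v'.
  by move=> u v u' v' e; apply: val_inj; rewrite /= !c0G; apply: (Ginv sc HE).
pose phi (i : 'I_n) : 'I_6 := if [pick p : V * V | c p.1 p.2 == i] is Some p then c0 p.1 p.2 else ord0.
have Hphi : forall u v, c0 u v = phi (c u v).
  move=> u v; rewrite /phi; case: pickP => [[u' v'] /= /eqP e|H]; first by apply: phiP.
  by have := H (u, v); rewrite /= eqxx.
have surj : forall k, exists i, phi i = k.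
  by move=> k; exists (c x0 (rep k)); rewrite -Hphi c0_rep.
have le1 : n <= 6.
  apply: (Hmin 6 c0 c0_scheme); exists o1 => x y; have := c0_E x y; rewrite /E0 => <-.
  by rewrite -val_eqE.
have imT : [set phi i | i in 'I_n] = setT.
  apply/setP => k; rewrite inE; have [i <-] := surj k; exact: imset_f.
have inj : injective phi.
  have : #|[set phi i | i in 'I_n]| == #|'I_n|.
    have := leq_imset_card phi 'I_n; rewrite imT cardsT !card_ord => le2.
    by rewrite eqn_leq le2 le1.
  by move/imset_injP => H x y; apply: H; rewrite inE.
pose phiinv (k : 'I_6) : 'I_n := odflt i1 [pick i | phi i == k].
have K2 : cancel phiinv phi.
  move=> k; rewrite /phiinv; case: pickP => [i /eqP //|H].
  by have [i e] := surj k; have := H i; rewrite e eqxx.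
exists phi, phiinv; split=> //.
by move=> i; apply: inj; rewrite K2.
Qed.

Lemma pnumE (T : finType) n (c : T -> T -> 'I_n) : is_scheme c -> forall x y (i j : 'I_n),
  pnum c (val (c x y)) (val i) (val j) = #|[set z | (c x z == i) && (c z y == j)]|.
Proof.
move=> [_ _ _ Hp] x y i j; rewrite /pnum; case: pickP => [[x' y'] /= e | H]; last first.
  by have := H (x, y); rewrite /= eqxx.
have e' : c x' y' = c x y by apply: val_inj; apply/eqP.
have [p Hpp] := Hp (c x y) i j.
rewrite (Hpp x y) // -(Hpp x' y') //; apply: eq_card => z; by rewrite !inE !val_eqE.
Qed.

Lemma valE m (a b : 'I_m) t : val b = t -> (val a == t) = (a == b).
Proof. by move=> <-; rewrite val_eqE. Qed.

Section Kside.
Variables (n : nat) (c : V -> V -> 'I_n) (phi : 'I_n -> 'I_6) (phiinv : 'I_6 -> 'I_n).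
Hypothesis gen : generated_by (gp_adj 8 3) c.
Hypotheses (K1 : cancel phi phiinv) (K2 : cancel phiinv phi) (Hphi : forall u v, c0 u v = phi (c u v)).
Variables (T' : finType) (c' : T' -> T' -> 'I_n) (sigma sigma' : 'I_n -> 'I_n).
Hypotheses (sc' : is_scheme c') (S1 : cancel sigma sigma') (S2 : cancel sigma' sigma).
Hypotheses (s0 : forall i, val i = 0 -> val (sigma i) = 0) (s1 : forall i, val i = 1 -> val (sigma i) = 1).
Hypothesis sval : forall i, valency c (val i) = valency c' (val (sigma i)).
Hypothesis sp : forall i j, pnum c (val i) 1 (val j) = pnum c' (val (sigma i)) 1 (val (sigma j)).

Definition K u v := phi (sigma' (c' u v)).

Let sc : is_scheme c. Proof. by case: gen. Qed.
Let z0 := c x0 x0.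
Let z1 := c x0 a0.
Let vz0 : val z0 = 0. Proof. by case: sc => H _ _ _; apply/eqP; rewrite H. Qed.
Let vz1 : val z1 = 1. Proof. case: gen => _ H _; apply/eqP; by rewrite H. Qed.
Let pz0 : val (phi z0) = 0. Proof. by rewrite -Hphi; apply/eqP; rewrite c0_0. Qed.
Let pz1 : phi z1 = o1. Proof. by rewrite -Hphi; apply: val_inj. Qed.
Let phiE a b : (phi a == phi b) = (a == b). Proof. exact: (inj_eq (can_inj K1)). Qed.
Let sigE a b : (sigma' a == b) = (a == sigma b). Proof. exact: can2_eq. Qed.

Lemma K_0 u v : (val (K u v) == 0) = (u == v).
Proof.
rewrite (valE _ pz0) /K phiE sigE; case: sc' => H _ _ _; rewrite -H; symmetry; exact: valE (s0 vz0).
Qed.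
Lemma K_sym u v : K u v = K v u.
Proof. by rewrite /K; case: sc' => _ H _ _; rewrite H. Qed.
Lemma K_1 u v : (val (K u v) == 1) = (val (c' u v) == 1).
Proof.
have vp1 : val (phi z1) = 1 by rewrite pz1.
rewrite (valE _ vp1) /K phiE sigE; symmetry; exact: valE (s1 vz1).
Qed.

Lemma K_P u v (j : 'I_6) : #|[set z | (K u z == o1) && (K z v == j)]| = P0n (K u v) j.
Proof.
pose h0 := sigma' (c' u v); have e : c' u v = sigma h0 by rewrite S2.
pose j0 := phiinv j.
have -> : [set z | (K u z == o1) && (K z v == j)] = [set z | (c' u z == sigma z1) && (c' z v == sigma j0)].
  by apply/setP => z; rewrite !inE /K -pz1 -{1}(K2 j) !phiE !sigE.
rewrite -pnumE // e (s1 vz1) -sp.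
case: sc => _ _ Hne _; have [u0 [v0 e0]] := Hne h0.
rewrite -e0 -[X in pnum _ _ X]vz1 pnumE //.
have -> : [set z | (c u0 z == z1) && (c z v0 == j0)] = [set z | (c0 u0 z == o1) && (c0 z v0 == j)].
  by apply/setP => z; rewrite !inE -pz1 -{1}(K2 j) !Hphi !phiE.
by rewrite c0_P Hphi e0.
Qed.

Lemma K_K u (j : 'I_6) : #|[set z | K u z == j]| = K0n j.
Proof.
pose j0 := phiinv j.
have -> : [set z | K u z == j] = [set z | (c' u z == sigma j0) && (c' z u == sigma j0)].
  apply/setP => z; rewrite !inE /K -{1}(K2 j) !phiE !sigE.
  by case: sc' => _ H _ _; rewrite (H z u) andbb.
have vuu : val (c' u u) = 0 by case: sc' => H _ _ _; apply/eqP; rewrite H.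
rewrite -pnumE // vuu -/(valency c' _) -sval /valency -[X in pnum _ X]vz0 pnumE //.
have -> : [set z | (c x0 z == j0) && (c z x0 == j0)] = [set z | c0 x0 z == j].
  by apply/setP => z; rewrite !inE -{1}(K2 j) !Hphi !phiE; case: sc => _ H _ _; rewrite (H z x0) andbb.
exact: c0_K.
Qed.

End Kside.

Lemma ccard3 (T : finType) (A : {pred T}) : #|A| = 3 ->
  exists a b d, [/\ uniq [:: a; b; d] & forall w, (w \in A) = (w \in [:: a; b; d])].
Proof.
rewrite cardE; have U := enum_uniq A; case E: (enum A) => [|a [|b [|d [|]]]] // _.
rewrite E in U; exists a, b, d; split; first exact U.
by move=> w; rewrite -mem_enum E.
Qed.
Lemma ccard2 (T : finType) (A : {pred T}) : #|A| = 2 ->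
  exists a b, [/\ a != b & forall w, (w \in A) = (w \in [:: a; b])].
Proof.
rewrite cardE; have U := enum_uniq A; case E: (enum A) => [|a [|b [|]]] // _.
exists a, b; split; last by move=> w; rewrite -mem_enum E.
by rewrite E /= inE andbT in U.
Qed.
Lemma ccard1 (T : finType) (A : {pred T}) : #|A| = 1 ->
  exists a, forall w, (w \in A) = (w == a).
Proof.
rewrite cardE; case E: (enum A) => [|a [|]] // _.
by exists a => w; rewrite -mem_enum E inE.
Qed.
Lemma card_le1 (T : finType) (A : {pred T}) w1 w2 : #|A| <= 1 -> w1 \in A -> w2 \in A -> w1 = w2.
Proof. by move/card_le1_eqP => H h1 h2; apply: H. Qed.
Lemma card_le2 (T : finType) (A : {pred T}) w1 w2 w3 : #|A| <= 2 -> w1 \in A -> w2 \in A -> w3 \in A ->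
  uniq [:: w1; w2; w3] -> False.
Proof.
move=> H h1 h2 h3 U.
have : #|[:: w1; w2; w3]| <= #|A|.
  by apply: subset_leq_card; apply/subsetP => w; rewrite !inE => /or3P [] /eqP ->.
by rewrite (card_uniqP U) /= => /leq_trans /(_ H).
Qed.
Lemma card_other (T : finType) (A : {pred T}) m : #|A| = 2 -> exists2 w, w \in A & w != m.
Proof.
move=> H; have : 0 < #|[predD1 A & m]|.
  by have := cardD1 m A; rewrite H; case: (m \in A) => /=; lia.
case/card_gt0P => w; rewrite !inE => /andP [h1 h2]; by exists w.
Qed.
Lemma card_ex (T : finType) (A : {pred T}) : 0 < #|A| -> exists w, w \in A.
Proof. by case/card_gt0P => w h; exists w. Qed.

Section Recon.
Variables (T' : finType) (K : T' -> T' -> 'I_6).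
Hypotheses (H0 : forall u v, (val (K u v) == 0) = (u == v)) (Hs : forall u v, K u v = K v u).
Hypothesis HP : forall u v (j : 'I_6), #|[set z | (K u z == o1) && (K z v == j)]| = P0n (K u v) j.
Hypothesis HK : forall u (j : 'I_6), #|[set z | K u z == j]| = K0n j.

Local Notation kk u v := (nat_of_ord (K u v)).
Definition adj u v := kk u v == 1.

Lemma ksym u v : kk u v = kk v u. Proof. by rewrite Hs. Qed.
Lemma adj_sym u v : adj u v = adj v u. Proof. by rewrite /adj ksym. Qed.
Lemma klt u v : kk u v < 6. Proof. exact: ltn_ord. Qed.

Lemma HPn u v j : j < 6 -> #|[set z | adj u z && (kk z v == j)]| = P0n (kk u v) j.
Proof.
move=> hj; rewrite -(HP u v (Ordinal hj)); apply: eq_card => z; by rewrite !inE.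
Qed.
Lemma HKn u j : j < 6 -> #|[set z | kk u z == j]| = K0n j.
Proof. move=> hj; rewrite -(HK u (Ordinal hj)); apply: eq_card => z; by rewrite !inE. Qed.

Lemma nbn b v j : j < 6 -> #|[set w | adj v w && (kk b w == j)]| = P0n (kk b v) j.
Proof.
move=> hj; rewrite ksym -(HPn v b hj); apply: eq_card => w; by rewrite !inE ksym.
Qed.

Lemma all_nb b v j w : j < 6 -> P0n (kk b v) j = 3 -> adj v w -> kk b w = j.
Proof.
move=> hj h3 avw.
have sub : [set w | adj v w && (kk b w == j)] \subset [set w | adj v w].
  by apply/subsetP => y; rewrite !inE => /andP [].
have : [set w | adj v w && (kk b w == j)] == [set w | adj v w].
  by rewrite eqEcard sub nbn // h3 /adj (HKn v (isT : 1 < 6)).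
move/eqP/setP/(_ w); by rewrite !inE avw => /eqP.
Qed.

Lemma one_nb b v j w1 w2 : j < 6 -> P0n (kk b v) j <= 1 -> adj v w1 -> adj v w2 ->
  kk b w1 = j -> kk b w2 = j -> w1 = w2.
Proof.
move=> hj h1 a1 a2 e1 e2; apply: (@card_le1 _ [set w | adj v w && (kk b w == j)]).
- by rewrite nbn.
- by rewrite !inE a1 e1 eqxx.
by rewrite !inE a2 e2 eqxx.
Qed.

Lemma ex_nb b v j : j < 6 -> 0 < P0n (kk b v) j -> exists w, adj v w /\ kk b w = j.
Proof.
move=> hj h; rewrite -nbn // in h; have [w] := card_ex h.
by rewrite !inE => /andP [h1 /eqP h2]; exists w.
Qed.

Lemma P0n_1 h : 0 < h < 6 -> P0n h 1 <= 1.
Proof. by case: h => [|[|[|[|[|[|]]]]]]. Qed.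

Lemma cn_le1 u v w1 w2 : u != v -> adj u w1 -> adj w1 v -> adj u w2 -> adj w2 v -> w1 = w2.
Proof.
move=> nuv a1 b1 a2 b2; apply: (@card_le1 _ [set w | adj u w && adj w v]).
- rewrite (_ : [set w | adj u w && adj w v] = [set w | adj u w && (kk w v == 1)]) //.
  rewrite HPn //; apply: P0n_1; rewrite klt andbT lt0n; by rewrite -H0 in nuv.
- by rewrite !inE a1 b1.
by rewrite !inE a2 b2.
Qed.

Lemma kk0 u : kk u u = 0. Proof. by apply/eqP; rewrite H0. Qed.
Lemma kneq u v : kk u v != kk u v -> False. Proof. by rewrite eqxx. Qed.
Lemma neq_of_k b u v : kk b u != kk b v -> u != v.
Proof. by apply: contra => /eqP ->. Qed.

End Recon.

Lemma card_bij (T1 T2 : finType) (g : T1 -> T2) (P : pred T2) : bijective g ->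
  #|P| = #|(fun y => P (g y))|.
Proof.
move=> [h gh hg]; rewrite -(card_imset _ (can_inj gh)); apply: eq_card => v.
apply/idP/imsetP => [Pv|[y Py ->]]; last by rewrite unfold_in in Py.
by exists (h v); rewrite ?hg // unfold_in hg.
Qed.

Lemma Gn_transport (T1 T2 : finType) (E1 : rel T1) (E2 : rel T2) (g : T1 -> T2) :
  bijective g -> (forall y w, E2 (g y) (g w) = E1 y w) ->
  forall y w, Gn (@crd T2) E2 (g y) (g w) = Gn (@crd T1) E1 y w.
Proof.
move=> bg HE.
have ginj := bij_inj bg.
have Hcn : forall y w, cn (@crd T2) E2 (g y) (g w) = cn (@crd T1) E1 y w.
  move=> y w; rewrite /cn /crd (card_bij _ bg); apply: eq_card => v; by rewrite !unfold_in !HE.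
have HD2 : forall y w, D2 (@crd T2) E2 (g y) (g w) = D2 (@crd T1) E1 y w.
  by move=> y w; rewrite /D2 (inj_eq ginj) HE Hcn.
move=> y w.
have Hn2 : n2 (@crd T2) E2 (g y) (g w) = n2 (@crd T1) E1 y w.
  rewrite /n2 /crd (card_bij _ bg); apply: eq_card => v; by rewrite !unfold_in HE HD2.
by rewrite /Gn (inj_eq ginj) HE Hcn Hn2.
Qed.

Section Spec.
Variables (T' : finType) (K : T' -> T' -> 'I_6).
Hypotheses (H0 : forall u v, (val (K u v) == 0) = (u == v)) (Hs : forall u v, K u v = K v u).
Hypothesis HP : forall u v (j : 'I_6), #|[set z | (K u z == o1) && (K z v == j)]| = P0n (K u v) j.
Hypothesis HK : forall u (j : 'I_6), #|[set z | K u z == j]| = K0n j.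
Local Notation kk u v := (nat_of_ord (K u v)).
Local Notation adj := (adj K).

Lemma K_spec u v : kk u v = Gn (@crd T') adj u v.
Proof.
have Hcn : forall u v, cn (@crd T') adj u v = P0n (kk u v) 1.
  move=> u' v'; rewrite -(HPn HP u' v' (isT : 1 < 6)) /cn /crd cardsE.
  by apply: eq_card => w; rewrite unfold_in.
have HD2 : forall u w, D2 (@crd T') adj u w = (kk u w == 2).
  move=> u' w; rewrite /D2 Hcn -H0 /adj.
  by case: (K u' w) => [[|[|[|[|[|[|]]]]]] ?].
have Hn2 : n2 (@crd T') adj u v = P0n (kk u v) 2.
  rewrite /n2 /crd -(nbn Hs HP u v (isT : 2 < 6)) cardsE.
  by apply: eq_card => w; rewrite unfold_in /= HD2.
rewrite /Gn -H0 Hcn Hn2 /adj.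
by case: (K u v) => [[|[|[|[|[|[|]]]]]] ?].
Qed.
End Spec.

Ltac dis := match goal with
   | E : ?p = ?q, H : is_true (?p != ?q) |- _ => by move: (H); rewrite E eqxx
   | E : ?p = ?q, H : is_true (?q != ?p) |- _ => by move: (H); rewrite E eqxx end.

Section Build.
Variables (T' : finType) (K : T' -> T' -> 'I_6).
Hypotheses (H0 : forall u v, (val (K u v) == 0) = (u == v)) (Hs : forall u v, K u v = K v u).
Hypothesis HP : forall u v (j : 'I_6), #|[set z | (K u z == o1) && (K z v == j)]| = P0n (K u v) j.
Hypothesis HK : forall u (j : 'I_6), #|[set z | K u z == j]| = K0n j.
Local Notation kk u v := (nat_of_ord (K u v)).
Local Notation adj := (adj K).
Variables (x a b d as_ at_ bs bt ds dt s t u1 u2 u3 z : T').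
Hypotheses (ka : kk x a = 1) (kb : kk x b = 1) (kd : kk x d = 1)
  (kas : kk x as_ = 2) (kat : kk x at_ = 2) (kbs : kk x bs = 2) (kbt : kk x bt = 2)
  (kds : kk x ds = 2) (kdt : kk x dt = 2) (ks : kk x s = 3) (kt : kk x t = 3)
  (ku1 : kk x u1 = 4) (ku2 : kk x u2 = 4) (ku3 : kk x u3 = 4) (kz : kk x z = 5).
Hypotheses (e1 : adj x a) (e2 : adj x b) (e3 : adj x d) (e4 : adj a as_) (e5 : adj a at_)
  (e6 : adj b bs) (e7 : adj b bt) (e8 : adj d ds) (e9 : adj d dt) (e10 : adj s as_)
  (e11 : adj s bs) (e12 : adj s ds) (e13 : adj t at_) (e14 : adj t bt) (e15 : adj t dt)
  (e16 : adj u1 as_) (e17 : adj u1 dt) (e18 : adj u2 bt) (e19 : adj u2 ds)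
  (e20 : adj u3 at_) (e21 : adj u3 bs) (e22 : adj z u1) (e23 : adj z u2) (e24 : adj z u3).
Hypotheses (n1 : a != b) (n2 : a != d) (n3 : b != d)
  (m1 : as_ != at_) (m2 : as_ != bs) (m3 : as_ != bt) (m4 : as_ != ds) (m5 : as_ != dt)
  (m6 : at_ != bs) (m7 : at_ != bt) (m8 : at_ != ds) (m9 : at_ != dt)
  (m10 : bs != bt) (m11 : bs != ds) (m12 : bs != dt) (m13 : bt != ds) (m14 : bt != dt)
  (m15 : ds != dt) (n4 : s != t) (n5 : u1 != u2) (n6 : u1 != u3) (n7 : u2 != u3).

Definition gmap (y : V) : T' :=
  match y.1, nat_of_ord y.2 with
  | false, 0 => x | false, 1 => a | false, 2 => as_ | false, 3 => u1 | false, 4 => z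
  | false, 5 => u2 | false, 6 => bt | false, _ => b
  | true, 0 => d | true, 1 => at_ | true, 2 => s | true, 3 => dt | true, 4 => u3
  | true, 5 => ds | true, 6 => t | true, _ => bs
  end.

Lemma g_cls y : kk x (gmap y) = val (c0 x0 y).
Proof.
case: y => [[] [[|[|[|[|[|[|[|[|m]]]]]]]] Hm]] //=; rewrite ?(kk0 H0) //. Qed.

Lemma g_hom y w : E0 y w -> adj (gmap y) (gmap w).
Proof.
case: y => [[] [[|[|[|[|[|[|[|[|m]]]]]]]] Hy]] //;
case: w => [[] [[|[|[|[|[|[|[|[|m']]]]]]]] Hw]] //= h;
  first [ assumption | rewrite (adj_sym Hs); assumption | by [] ].
Qed.

Lemma g_inj : injective gmap.
Proof.
move=> y w e.
have hc : val (c0 x0 y) = val (c0 x0 w) by rewrite -!g_cls e.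
apply/eqP; move: e hc.
case: y => [[] [[|[|[|[|[|[|[|[|m]]]]]]]] Hy]] //;
case: w => [[] [[|[|[|[|[|[|[|[|m']]]]]]]] Hw]] //= E hc;
  first [ done | (move/eqP: hc; done) | idtac ]; rewrite /gmap /= in E; dis.
Qed.
Lemma cardT' : #|T'| = 16.
Proof.
rewrite -sum1_card (partition_big (K x) predT) //=.
rewrite (eq_bigr (fun j : 'I_6 => K0n j)); first by rewrite !big_ord_recr big_ord0.
move=> j _; rewrite -(HK x j) -sum1_card; apply: eq_bigl => v; by rewrite inE.
Qed.

Lemma g_bij : bijective gmap.
Proof. apply: (inj_card_bij g_inj); by rewrite cardT' card_prod card_bool card_ord. Qed.

Lemma g_iso y w : adj (gmap y) (gmap w) = E0 y w.
Proof.
apply/idP/idP => [h|]; last exact: g_hom.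
have sub : [set gmap v | v in [set v | E0 y v]] \subset [set v | adj (gmap y) v].
  by apply/subsetP => v /imsetP [v' hv' ->]; rewrite inE g_hom //; rewrite inE in hv'.
have : [set gmap v | v in [set v | E0 y v]] == [set v | adj (gmap y) v].
  by rewrite eqEcard sub card_imset ?E0_deg /adj ?(HKn HK _ (isT : 1 < 6)) //; exact: g_inj.
move/eqP/setP/(_ (gmap w)); rewrite mem_imset; last exact: g_inj.
by rewrite !inE h.
Qed.

Lemma build_ok : exists g : V -> T', bijective g /\ forall y w, K (g y) (g w) = c0 y w.
Proof.
exists gmap; split; first exact: g_bij.
move=> y w; apply: val_inj; rewrite /= (K_spec H0 Hs HP) c0G.
exact: (Gn_transport g_bij g_iso).
Qed.
End Build.

Ltac dstn := first [ assumption | (rewrite eq_sym; assumption) ].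

Lemma uniq3 (T : eqType) (p q r : T) : p != q -> p != r -> q != r -> uniq [:: p; q; r].
Proof. by rewrite /= !inE negb_or => -> -> ->. Qed.

Section Cons.
Variables (T' : finType) (K : T' -> T' -> 'I_6).
Hypotheses (H0 : forall u v, (val (K u v) == 0) = (u == v)) (Hs : forall u v, K u v = K v u).
Hypothesis HP : forall u v (j : 'I_6), #|[set z | (K u z == o1) && (K z v == j)]| = P0n (K u v) j.
Hypothesis HK : forall u (j : 'I_6), #|[set z | K u z == j]| = K0n j.
Local Notation kk u v := (nat_of_ord (K u v)).
Local Notation adj := (adj K).
Variable x : T'.

Let asym u v : adj u v = adj v u := adj_sym Hs u v.
Let ksy u v : kk u v = kk v u := ksym Hs u v.
Let adjk u v : adj u v -> kk u v = 1. Proof. by move/eqP. Qed.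

Let allnb b v j w (hj : j < 6) (h : P0n (kk b v) j = 3) (e : adj v w) : kk b w = j :=
  all_nb Hs HP HK hj h e.

Let distk b u v : kk b u <> kk b v -> u != v.
Proof. by move=> h; apply/eqP => e; apply: h; rewrite e. Qed.

Let cnu u v w1 w2 : kk x u <> kk x v -> adj u w1 -> adj w1 v -> adj u w2 -> adj w2 v -> w1 = w2.
Proof. move=> h; apply: (cn_le1 H0 HP); exact: distk h. Qed.

Let onenb v j w1 w2 : j < 6 -> P0n (kk x v) j <= 1 -> adj v w1 -> adj v w2 ->
  kk x w1 = j -> kk x w2 = j -> w1 = w2 := @one_nb _ _ Hs HP x v j w1 w2.

Let exnb v j : j < 6 -> 0 < P0n (kk x v) j -> exists w, adj v w /\ kk x w = j :=
  @ex_nb _ _ Hs HP x v j.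

Let le2 u m1 m2 m3 : kk x u = 4 -> adj u m1 -> adj u m2 -> adj u m3 ->
  kk x m1 = 2 -> kk x m2 = 2 -> kk x m3 = 2 -> uniq [:: m1; m2; m3] -> False.
Proof.
move=> ku h1 h2 h3 k1 k2 k3 U.
apply: (@card_le2 _ [set w | adj u w && (kk x w == 2)] m1 m2 m3) => //.
- by rewrite (nbn Hs HP x u (isT : 2 < 6)) ku.
- by rewrite inE h1 k1.
- by rewrite inE h2 k2.
by rewrite inE h3 k3.
Qed.

Lemma recon : exists g : V -> T', bijective g /\ forall y w, K (g y) (g w) = c0 y w.
Proof.
have [a [b [d [Uabd Nx]]]] := ccard3 (HKn HK x (isT : 1 < 6)).
have [s [t [nst St]]] := ccard2 (HKn HK x (isT : 3 < 6)).
have [z Zz] := ccard1 (HKn HK x (isT : 5 < 6)).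
have inN : forall P, adj x P -> P \in [:: a; b; d].
  by move=> P h; rewrite -Nx inE.
have Nadj : forall P, P \in [:: a; b; d] -> adj x P.
  by move=> P h; rewrite -Nx inE in h.
have ea := Nadj a (mem_head _ _).
have eb : adj x b by apply: Nadj; rewrite !inE eqxx orbT.
have ed : adj x d by apply: Nadj; rewrite !inE eqxx !orbT.
have ka := adjk ea; have kb := adjk eb; have kd := adjk ed.
have ks : kk x s = 3 by have := St s; rewrite mem_head inE => /eqP.
have kt : kk x t = 3 by have := St t; rewrite !inE eqxx orbT => /eqP.
have kz : kk x z = 5 by have := Zz z; rewrite eqxx inE => /eqP.
move: Uabd; rewrite /= !inE negb_or => /andP [/andP [nab nad] /andP [nbd _]].
have cls3 : forall w, kk x w = 3 -> w = s \/ w = t.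
  move=> w hw; have := St w; rewrite inE hw eqxx !inE => /esym /orP [/eqP|/eqP]; by [left|right].
have cls5 : forall w, kk x w = 5 -> w = z.
  by move=> w hw; apply/eqP; rewrite -Zz inE hw.
have par : forall w, kk x w = 2 -> exists2 P, P \in [:: a; b; d] & adj w P.
  move=> w hw; have [P [h1 h2]] := @exnb w _ (isT : 1 < 6) ltac:(by rewrite hw).
  by exists P => //; apply: inN; apply/eqP.
have q3 : forall w, kk x w = 2 -> adj w s \/ adj w t.
  move=> w hw; have [Q [h1 h2]] := @exnb w _ (isT : 3 < 6) ltac:(by rewrite hw).
  by case: (cls3 Q h2) => <-; [left|right].
have kQP : forall P Q, adj x P -> kk x Q = 3 -> kk Q P = 2.
  by move=> P Q hP hQ; apply: (@allnb Q x 2 P isT _ hP); rewrite ksy hQ.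
have cnex : forall P Q, adj x P -> kk x Q = 3 -> exists m, [/\ adj P m, adj m Q & kk x m = 2].
  move=> P Q hP hQ.
  have : 0 < #|[set w | adj P w && (kk w Q == 1)]|.
    by rewrite (HPn HP P Q (isT : 1 < 6)) ksy (kQP P Q hP hQ).
  case/card_ex => m; rewrite inE => /andP [h1 h2]; exists m; split => //.
  by apply: (@allnb x Q 2 m isT); rewrite ?hQ // asym.
have [as_ [asa ass kas]] := cnex a s ea ks.
have [at_ [ata att kat]] := cnex a t ea kt.
have [bs [bsb bss kbs]] := cnex b s eb ks.
have [bt [btb btt kbt]] := cnex b t eb kt.
have [ds [dsd dss kds]] := cnex d s ed ks.
have [dt [dtd dtt kdt]] := cnex d t ed kt.
have distP : forall m m' P P', adj P m -> adj P' m' -> kk x P = 1 -> kk x P' = 1 -> kk x m = 2 ->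
    P != P' -> m != m'.
  move=> m m' P P' h1 h2 k1 k2 km nPP'; apply/eqP => e; subst m'; move/eqP: nPP'; apply.
  by apply: (@onenb m 1 P P' isT) => //; rewrite ?km // asym.
have distQ : forall m m' Q Q', adj m Q -> adj m' Q' -> kk x Q = 3 -> kk x Q' = 3 -> kk x m = 2 ->
    Q != Q' -> m != m'.
  move=> m m' Q Q' h1 h2 k1 k2 km nQQ'; apply/eqP => e; subst m'; move/eqP: nQQ'; apply.
  by apply: (@onenb m 3 Q Q' isT) => //; rewrite ?km.
have n1 : as_ != at_ := distQ _ _ _ _ ass att ks kt kas nst.
have n2 : as_ != bs := distP _ _ _ _ asa bsb ka kb kas nab.
have n3 : as_ != bt := distP _ _ _ _ asa btb ka kb kas nab.
have n4 : as_ != ds := distP _ _ _ _ asa dsd ka kd kas nad.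
have n5 : as_ != dt := distP _ _ _ _ asa dtd ka kd kas nad.
have n6 : at_ != bs := distP _ _ _ _ ata bsb ka kb kat nab.
have n7 : at_ != bt := distP _ _ _ _ ata btb ka kb kat nab.
have n8 : at_ != ds := distP _ _ _ _ ata dsd ka kd kat nad.
have n9 : at_ != dt := distP _ _ _ _ ata dtd ka kd kat nad.
have n10 : bs != bt := distQ _ _ _ _ bss btt ks kt kbs nst.
have n11 : bs != ds := distP _ _ _ _ bsb dsd kb kd kbs nbd.
have n12 : bs != dt := distP _ _ _ _ bsb dtd kb kd kbs nbd.
have n13 : bt != ds := distP _ _ _ _ btb dsd kb kd kbt nbd.
have n14 : bt != dt := distP _ _ _ _ btb dtd kb kd kbt nbd.
have n15 : ds != dt := distQ _ _ _ _ dss dtt ks kt kds nst.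
have Uex : forall m, kk x m = 2 -> exists u, adj m u /\ kk x u = 4.
  by move=> m hm; apply: (@exnb m 4 isT); rewrite hm.
have Uun : forall m u u', kk x m = 2 -> adj m u -> adj m u' -> kk x u = 4 -> kk x u' = 4 -> u = u'.
  by move=> m u u' hm h1 h2 k1 k2; apply: (@onenb m 4 u u' isT) => //; rewrite hm.
have uz : forall u, kk x u = 4 -> adj z u.
  move=> u hu; have [w [h1 h2]] := @exnb u 5 isT ltac:(by rewrite hu).
  by rewrite -(cls5 w h2) asym.
have pairing : forall P1 m1 u, adj x P1 -> adj P1 m1 -> adj m1 s -> kk x m1 = 2 -> adj m1 u ->
    kk x u = 4 -> exists P w, [/\ adj x P, P != P1, adj P w, adj w t & adj u w].
  move=> P1 m1 u hP1 h1 h2 km h3 ku.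
  have [w hw nw] := card_other m1 (A := [set w | adj u w && (kk x w == 2)])
    ltac:(by rewrite (nbn Hs HP x u (isT : 2 < 6)) ku).
  move: hw; rewrite inE => /andP [uw /eqP kw].
  have [P hP wP] := par w kw.
  have hPx : adj x P := Nadj P hP.
  have nmw : m1 != w by rewrite eq_sym.
  case: (q3 w kw) => wQ.
    have e : s = u by apply: (cn_le1 H0 HP nmw) => //; rewrite asym.
    by move: ks; rewrite e ku.
  exists P, w; split => //; last by rewrite asym.
  apply/eqP => e; subst P.
  have e : P1 = u by apply: (cn_le1 H0 HP nmw) => //; rewrite asym.
  by move: (adjk hP1); rewrite e ku.
have tchild : forall P w w', kk x P = 1 -> adj P w -> adj w t -> adj P w' -> adj w' t -> w = w'.
  by move=> P w w' kP; apply: cnu; rewrite kP kt.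
have coll : forall m1 m2 w u u', kk x m1 = 2 -> kk x m2 = 2 -> kk x w = 2 -> uniq [:: m1; m2; w] ->
    adj m1 u -> adj m2 u' -> adj u w -> adj u' w -> kk x u = 4 -> kk x u' = 4 -> False.
  move=> m1 m2 w u u' k1 k2 kw U h1 h2 h3 h4 ku ku'.
  have e : u = u' by apply: (Uun w) => //; rewrite asym.
  subst u'; apply: (@le2 u m1 m2 w) => //; by rewrite asym.
have udist : forall u u' m1 m2 m3, kk x u = 4 -> adj u m1 -> adj u m2 -> adj u' m3 ->
    kk x m1 = 2 -> kk x m2 = 2 -> kk x m3 = 2 -> uniq [:: m1; m2; m3] -> u != u'.
  move=> u u' m1 m2 m3 ku h1 h2 h3 k1 k2 k3 U; apply/eqP => e; subst u'.
  exact: (@le2 u m1 m2 m3).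
have [ua [asua kua]] := Uex as_ kas.
have [ub [bsub kub]] := Uex bs kbs.
have [ud [dsud kud]] := Uex ds kds.
have [Pa [wa [hPa nPa Pawa wat uawa]]] := pairing a as_ ua ea asa ass kas asua kua.
have [Pb [wb [hPb nPb Pbwb wbt ubwb]]] := pairing b bs ub eb bsb bss kbs bsub kub.
have [Pd [wd [hPd nPd Pdwd wdt udwd]]] := pairing d ds ud ed dsd dss kds dsud kud.
have : (wa = bt) \/ (wa = dt).
  move: (inN Pa hPa); rewrite !inE => /or3P [] /eqP ePa; subst Pa.
  - by rewrite eqxx in nPa.
  - by left; apply: (tchild b).
  - by right; apply: (tchild d).
have : (wb = at_) \/ (wb = dt).
  move: (inN Pb hPb); rewrite !inE => /or3P [] /eqP ePb; subst Pb.
  - by left; apply: (tchild a).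
  - by rewrite eqxx in nPb.
  - by right; apply: (tchild d).
have : (wd = at_) \/ (wd = bt).
  move: (inN Pd hPd); rewrite !inE => /or3P [] /eqP ePd; subst Pd.
  - by left; apply: (tchild a).
  - by right; apply: (tchild b).
  - by rewrite eqxx in nPd.
case=> ewd; case=> ewb; case=> ewa; subst wd wb wa;
  try (exfalso; first [ by apply: (coll as_ bs dt ua ub) => //; apply: uniq3; dstn
         | by apply: (coll as_ ds bt ua ud) => //; apply: uniq3; dstn
         | by apply: (coll bs ds at_ ub ud) => //; apply: uniq3; dstn ]).
- have v1 : ud != ub by apply: (udist ud ub ds at_ bs); first [ assumption | (rewrite asym; assumption) | (apply: uniq3; dstn) ].
  have v2 : ud != ua by apply: (udist ud ua ds at_ as_); first [ assumption | (rewrite asym; assumption) | (apply: uniq3; dstn) ].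
  have v3 : ub != ua by apply: (udist ub ua bs dt as_); first [ assumption | (rewrite asym; assumption) | (apply: uniq3; dstn) ].
  apply: (build_ok H0 Hs HP HK (x:=x) (a:=a) (b:=b) (d:=d) (as_:=at_) (at_:=as_) (bs:=bt) (bt:=bs)
    (ds:=dt) (dt:=ds) (s:=t) (t:=s) (u1:=ud) (u2:=ub) (u3:=ua) (z:=z));
  first [ assumption | (rewrite asym; assumption) | dstn | (apply: uz; assumption) ].
- have v1 : ua != ud by apply: (udist ua ud as_ dt ds); first [ assumption | (rewrite asym; assumption) | (apply: uniq3; dstn) ].
  have v2 : ua != ub by apply: (udist ua ub as_ dt bs); first [ assumption | (rewrite asym; assumption) | (apply: uniq3; dstn) ].
  have v3 : ud != ub by apply: (udist ud ub ds bt bs); first [ assumption | (rewrite asym; assumption) | (apply: uniq3; dstn) ].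
  apply: (build_ok H0 Hs HP HK (x:=x) (a:=a) (b:=b) (d:=d) (as_:=as_) (at_:=at_) (bs:=bs) (bt:=bt)
    (ds:=ds) (dt:=dt) (s:=s) (t:=t) (u1:=ua) (u2:=ud) (u3:=ub) (z:=z));
  first [ assumption | (rewrite asym; assumption) | dstn | (apply: uz; assumption) ].
Qed.
End Cons.

Theorem proposition3p2 (n : nat) (c : bool * 'I_8 -> bool * 'I_8 -> 'I_n) :
  generated_by (gp_adj 8 3) c ->
  forall (T' : finType) (n' : nat) (c' : T' -> T' -> 'I_n'),
    is_scheme c' -> same_diagram c c' -> scheme_iso_dist c c'.
Proof.
move=> gen T' n' c' sc' [en [sigma [sb s0 s1 sval sp]]].
subst n'.
have [phi [phiinv [K1 K2 Hphi]]] := Tside gen.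
have [sigma' S1 S2] := sb.
have [x [_ _]] : exists x y, c' x y = sigma (c x0 x0) by case: sc' => _ _ H _; exact: H.
have H0 := K_0 gen K1 Hphi sc' S1 S2 s0.
have Hs := K_sym phi sigma' sc'.
have HP := K_P gen K1 K2 Hphi sc' S1 S2 s1 sp.
have HK := K_K gen K1 K2 Hphi sc' S1 S2 sval.
have [g [gb Hg]] := recon H0 Hs HP HK x.
have [h gh hg] := gb.
exists h, sigma'; split.
- by exists g.
- by exists sigma.
- move=> u v; apply: (can_inj K1); rewrite -Hphi -Hg !hg.
  by [].
move=> i; rewrite -{2}[i]S2.
have vz1 : val (c x0 a0) = 1.
  by case: gen => _ H _; apply/eqP; rewrite H.
apply/idP/idP => [/eqP h1|/eqP h1].
  by apply/eqP; apply: s1.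
have : sigma (sigma' i) = sigma (c x0 a0) by apply: val_inj; rewrite /= h1 (s1 _ vz1).
by move/(can_inj S1) ->; rewrite vz1.
Qed.
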